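(* Let $G$ be an undirected, weighted, connected graph on vertices $1,\dots,n$, and let $H$ be either its adjacency matrix or its Laplacian matrix, with eigenvalues $\lambda_1\le\cdots\le\lambda_n$. For real $t$ let $p(t)=|\langle s|e^{itH}|r\rangle|^2$ be the fidelity of state transfer from a sender vertex $s$ to a receiver vertex $r$, and suppose $p(t_0)=1$. Let $h\in\mathbb{R}$ satisfy $|h|<\frac{\pi}{\lambda_n-\lambda_1}$. Then \[ p(t_0+h)\ \ge\ 1-h^2\left(\langle s|H^2|s\rangle-\left(\langle s|H|s\rangle\right)^2\right). \]
   Context: For a weighted graph with edge weights $w(j,k)$, the adjacency matrix $A=[a_{jk}]$ has $a_{jk}=w(j,k)$ if $j,k$ are adjacent and $a_{jk}=0$ otherwise; the Laplacian is $L=R-A$ where $R$ is the diagonal matrix of row sums of $A$. $\{|1\rangle,\dots,|n\rangle\}$ is the standard basis of $\mathbb{C}^n$, so $\langle j|M|k\rangle$ is the $(j,k)$ entry of a matrix $M$. *)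

(* Defs.v *)
From HB Require Import structures.
From mathcomp Require Import all_boot all_order all_algebra.
From mathcomp Require Import all_classical all_reals all_analysis.
Set Implicit Arguments. Unset Strict Implicit. Unset Printing Implicit Defensive.
Import Order.TTheory GRing.Theory Num.Theory.
Local Open Scope ring_scope.

Section Defs.
Variables (R : realType) (n : nat).

Definition adjacency (e : rel 'I_n) (w : 'I_n -> 'I_n -> R) : 'M[R]_n :=
  \matrix_(j, k) (if e j k then w j k else 0).

Definition laplacian (e : rel 'I_n) (w : 'I_n -> 'I_n -> R) : 'M[R]_n :=
  diag_mx (\row_j (\sum_k adjacency e w j k)) - adjacency e w.

(* <s| e^{itH} |r> = <s|cos(tH)|r> + i <s|sin(tH)|r>, with the exponential
   defined by its power series  e^{itH} = \sum_m (itH)^m / m!,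
   split into its real (even m) and imaginary (odd m) parts. *)
Definition expiH_re (H : 'M[R]_n) (t : R) (s r : 'I_n) : R :=
  limn (fun N => \sum_(k < N)
          ((-1) ^+ k * t ^+ (2 * k) / ((2 * k)`!)%:R * (H ^+ (2 * k)) s r)).

Definition expiH_im (H : 'M[R]_n) (t : R) (s r : 'I_n) : R :=
  limn (fun N => \sum_(k < N)
          ((-1) ^+ k * t ^+ (2 * k).+1 / ((2 * k).+1`!)%:R
             * (H ^+ (2 * k).+1) s r)).

Definition fidelity (H : 'M[R]_n) (s r : 'I_n) (t : R) : R :=
  expiH_re H t s r ^+ 2 + expiH_im H t s r ^+ 2.

End Defs.

(* Main.v *)
Require Import Defs.
From HB Require Import structures.
From mathcomp Require Import all_boot all_order all_algebra.
From mathcomp Require Import all_classical all_reals all_analysis.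
From mathcomp Require Import complex.
From mathcomp Require Import ring lra.
Set Implicit Arguments. Unset Strict Implicit. Unset Printing Implicit Defensive.
Import Order.TTheory GRing.Theory Num.Theory.
Import numFieldNormedType.Exports.
Local Open Scope ring_scope.
Section CosIneq.
Variable R : realType.

Lemma sin_le_id (x : R) : 0 <= x -> sin x <= x.
Proof.
rewrite le_eqVlt => /orP[/eqP <-|x0]; first by rewrite sin0.
have [c _ Hc] := @MVT R sin cos 0 x x0 (fun y _ => is_derive_sin y)
  (continuous_subspaceT (@continuous_sin R)).
move: Hc; rewrite sin0 !subr0 => ->.
by apply: ler_piMl; [exact: ltW | exact: cos_le1].
Qed.

Lemma cos_ge_quad_pos (x : R) : 0 <= x -> 1 - x ^+ 2 / 2 <= cos x.
Proof.
rewrite le_eqVlt => /orP[/eqP <-|x0]; first by rewrite cos0 expr0n /= mul0r subr0.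
pose f := fun y : R => cos y + y ^+ 2 / 2.
have df : forall y : R, is_derive y (1:R) f (- sin y + y).
  move=> y; rewrite /f.
  apply: is_derive_eq.
  by rewrite !scaler0 add0r /GRing.scale /= mulr1; field.
have cf : continuous f.
  move=> z; apply: differentiable_continuous; apply/derivable1_diffP.
  exact: (@ex_derive R R R z 1 f _ (df z)).
have [c /andP[c0 _] Hc] := @MVT R f (fun y => - sin y + y) 0 x x0 (fun y _ => df y)
  (continuous_subspaceT cf).
have : 0 <= f x - f 0.
  rewrite Hc; apply: mulr_ge0; last by rewrite subr_ge0 ltW.
  by rewrite addrC subr_ge0; apply: sin_le_id; rewrite ltW.
rewrite /f cos0 expr0n /= mul0r addr0 subr_ge0 => H.
by rewrite lerBlDr.
Qed.

Lemma cos_ge_quad (x : R) : 1 - x ^+ 2 / 2 <= cos x.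
Proof.
have [x0|x0] := leP 0 x; first exact: cos_ge_quad_pos.
rewrite -cosN -sqrrN; apply: cos_ge_quad_pos.
by rewrite oppr_ge0 ltW.
Qed.
End CosIneq.
Section Ser.
Variable R : realType.

Lemma neg1_exprz (k : nat) : (-1 : R) ^ (k : int) = (-1) ^+ k.
Proof. by []. Qed.

Lemma limn_sum_cos (n : nat) (g l : 'I_n -> R) (t : R) :
  limn (fun N => \sum_(k < N) ((-1) ^+ k * t ^+ (2 * k) / ((2 * k)`!)%:R
      * \sum_j g j * l j ^+ (2 * k))) = \sum_j g j * cos (t * l j).
Proof.
apply: cvg_lim; first exact: Rhausdorff.
have E : forall N, \sum_(k < N) ((-1) ^+ k * t ^+ (2 * k) / ((2 * k)`!)%:R
      * \sum_j g j * l j ^+ (2 * k)) = \sum_j g j * series (cos_coeff' (t * l j)) N.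
  move=> N; under eq_bigr do rewrite mulr_sumr.
  rewrite exchange_big /=; apply: eq_bigr => j _.
  rewrite /series /= big_mkord mulr_sumr; apply: eq_bigr => k _.
  rewrite /cos_coeff' exprMn -mul2n (neg1_exprz k); ring.
rewrite (_ : (fun N => _) = (fun N => \sum_j g j * series (cos_coeff' (t * l j)) N)); last by apply/funext => N; exact: E.
apply: (@cvg_big R _ +%R 0 (fun _ => true)) => // [|j _].
  exact: add_continuous.
apply: cvgMl_tmp; exact: cvg_cos_coeff'.
Qed.

Lemma limn_sum_sin (n : nat) (g l : 'I_n -> R) (t : R) :
  limn (fun N => \sum_(k < N) ((-1) ^+ k * t ^+ (2 * k).+1 / ((2 * k).+1`!)%:R
      * \sum_j g j * l j ^+ (2 * k).+1)) = \sum_j g j * sin (t * l j).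
Proof.
apply: cvg_lim; first exact: Rhausdorff.
have E : forall N, \sum_(k < N) ((-1) ^+ k * t ^+ (2 * k).+1 / ((2 * k).+1`!)%:R
      * \sum_j g j * l j ^+ (2 * k).+1) = \sum_j g j * series (sin_coeff' (t * l j)) N.
  move=> N; under eq_bigr do rewrite mulr_sumr.
  rewrite exchange_big /=; apply: eq_bigr => j _.
  rewrite /series /= big_mkord mulr_sumr; apply: eq_bigr => k _.
  rewrite /sin_coeff' exprMn -mul2n (neg1_exprz k); ring.
rewrite (_ : (fun N => _) = (fun N => \sum_j g j * series (sin_coeff' (t * l j)) N)); last by apply/funext => N; exact: E.
apply: (@cvg_big R _ +%R 0 (fun _ => true)) => // [|j _].
  exact: add_continuous.
apply: cvgMl_tmp; exact: cvg_sin_coeff'.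
Qed.

Lemma limn_cos (n : nat) (F : nat -> R) (g l : 'I_n -> R) (t : R) :
  (forall m, F m = \sum_j g j * l j ^+ m) ->
  limn (fun N => \sum_(k < N) ((-1) ^+ k * t ^+ (2 * k) / ((2 * k)`!)%:R
      * F (2 * k)%N)) = \sum_j g j * cos (t * l j).
Proof.
move=> HF; rewrite -limn_sum_cos; congr (limn _); apply/funext => N.
by apply: eq_bigr => k _; rewrite HF.
Qed.

Lemma limn_sin (n : nat) (F : nat -> R) (g l : 'I_n -> R) (t : R) :
  (forall m, F m = \sum_j g j * l j ^+ m) ->
  limn (fun N => \sum_(k < N) ((-1) ^+ k * t ^+ (2 * k).+1 / ((2 * k).+1`!)%:R
      * F (2 * k)%N.+1)) = \sum_j g j * sin (t * l j).
Proof.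
move=> HF; rewrite -limn_sum_sin; congr (limn _); apply/funext => N.
by apply: eq_bigr => k _; rewrite HF.
Qed.

Lemma zero_cos (n : nat) (g l : 'I_n -> R) (t : R) :
  (forall m, 0 = \sum_j g j * l j ^+ m) -> \sum_j g j * cos (t * l j) = 0.
Proof.
move=> HF; rewrite -(limn_cos (F := fun _ => 0)) //.
rewrite (_ : (fun N => _) = (fun _ => 0)); first exact: lim_cst.
by apply/funext => N; apply: big1 => k _; rewrite mulr0.
Qed.

Lemma zero_sin (n : nat) (g l : 'I_n -> R) (t : R) :
  (forall m, 0 = \sum_j g j * l j ^+ m) -> \sum_j g j * sin (t * l j) = 0.
Proof.
move=> HF; rewrite -(limn_sin (F := fun _ => 0)) //.
rewrite (_ : (fun N => _) = (fun _ => 0)); first exact: lim_cst.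
by apply/funext => N; apply: big1 => k _; rewrite mulr0.
Qed.
End Ser.
Section SpecSec.
Local Open Scope complex_scope.
Local Open Scope sesquilinear_scope.
Section Spec.
Variable R : realType.

Lemma spectral_rep n (H : 'M[R]_n) : H^T = H ->
  exists (P : 'M[R[i]]_n) (l : 'I_n -> R),
   (forall i k, \sum_j (P j i)^* * P j k = (i == k)%:R) /\
   (forall m i k, ((H ^+ m) i k)%:C = \sum_j (P j i)^* * P j k * (l j ^+ m)%:C).
Proof.
move=> HT.
pose Hc := map_mx (real_complex R) H.
have Hsym : Hc \is symmetricmx.
  apply/is_hermitianmxP; rewrite expr0 scale1r.
  apply/matrixP => i j; rewrite !mxE.
  by rewrite -[in LHS]HT mxE.
have Hreal : Hc \is a realmx.
  apply/mxOverP => i j; rewrite mxE.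
  by rewrite realE -[0 : R[i]]/((0:R)%:C) !lecR le_total.
pose P := spectralmx Hc; pose d := spectral_diag Hc.
have Hherm : Hc \is hermsymmx by exact: realsym_hermsym.
have Hdec : Hc = invmx P *m diag_mx d *m P.
  by apply/orthomx_spectralP; exact: hermitian_normalmx.
have dreal := hermitian_spectral_diag_real Hherm.
have Pu : P \in unitmx by exact: spectral_unit.
have Pinv : invmx P = P ^t* by exact/invmx_unitary/spectral_unitarymx.
have dR : forall j, d 0 j = (complex.Re (d 0 j))%:C.
  move=> j; move/mxOverP: dreal => /(_ 0 j).
  rewrite -/d; case: (d 0 j) => a b.
  rewrite realE !lecE /=.
  by move=> /orP[/andP[/eqP -> _]|/andP[/eqP <- _]].
clear dreal; clearbody P d.
have Hpow : forall m, Hc ^+ m = invmx P *m diag_mx (\row_j (d 0 j ^+ m)) *m P.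
  elim => [|m IH].
    rewrite expr0 (_ : diag_mx _ = 1%:M); last first.
      by apply/matrixP => i j; rewrite !mxE expr0.
    by rewrite mulmx1 (mulVmx Pu) idmxE.
  rewrite exprS IH {1}Hdec -mulmxE !mulmxA.
  rewrite -(mulmxA (invmx P *m diag_mx d) P (invmx P)) (mulmxV Pu) mulmx1.
  rewrite -(mulmxA (invmx P) (diag_mx d)) mulmx_diag.
  congr (_ *m _ *m _); apply/matrixP => i j; by rewrite !mxE exprS.
have Hmap : forall m, (H ^+ m) ^ real_complex R = Hc ^+ m.
  elim => [|m IH]; first by rewrite !expr0 -!idmxE map_mx1.
  by rewrite !exprS -!mulmxE map_mxM IH.
exists P, (fun j => complex.Re (d 0 j)); split.
  move=> i k.
  have := congr1 (fun M : 'M[R[i]]_n => M i k) (mulVmx Pu).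
  rewrite Pinv /= !mxE => <-; apply: eq_bigr => j _.
  by rewrite !mxE.
move=> m i k.
have := congr1 (fun M : 'M[R[i]]_n => M i k) (Hmap m).
rewrite Hpow mxE => ->.
rewrite mul_mx_diag !mxE; apply: eq_bigr => j _.
by rewrite !mxE Pinv !mxE rmorphXn /= -dR mulrAC.
Qed.
End Spec.
End SpecSec.
Section CxSec.
Local Open Scope complex_scope.
Local Open Scope ring_scope.
Section Cx.
Variable R : realType.
Notation C := (R[i] : numClosedFieldType).
Definition ex (x : R) : C := cos x +i* sin x.

Lemma my_cplxE (z : C) : z = complex.Re z +i* complex.Im z.
Proof. by case: z. Qed.

Lemma my_conjE (a b : R) : (a +i* b : C)^* = a +i* (- b).
Proof. by []. Qed.

Lemma my_exD x y : ex x * ex y = ex (x + y).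
Proof. by rewrite /ex cosD sinD /=; congr (_ +i* _); ring. Qed.

Lemma my_ex_conj x : ex x * (ex x)^* = 1.
Proof.
rewrite /ex /=; have := cos2Dsin2 x.
move=> E; congr (_ +i* _); [rewrite -E; ring | ring].
Qed.

Lemma my_ReD (x y : C) : complex.Re (x + y) = complex.Re x + complex.Re y.
Proof. by case: x; case: y. Qed.
Lemma my_ImD (x y : C) : complex.Im (x + y) = complex.Im x + complex.Im y.
Proof. by case: x; case: y. Qed.
Lemma my_Re_sum (I : finType) (F : I -> C) : complex.Re (\sum_j F j) = \sum_j complex.Re (F j).
Proof. by elim/big_rec2: _ => // j x y _ <-; rewrite my_ReD. Qed.
Lemma my_Im_sum (I : finType) (F : I -> C) : complex.Im (\sum_j F j) = \sum_j complex.Im (F j).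
Proof. by elim/big_rec2: _ => // j x y _ <-; rewrite my_ImD. Qed.
Lemma my_ReMr (z : C) (x : R) : complex.Re (z * x%:C) = complex.Re z * x.
Proof. by case: z => a b /=; ring. Qed.
Lemma my_ImMr (z : C) (x : R) : complex.Im (z * x%:C) = complex.Im z * x.
Proof. by case: z => a b /=; ring. Qed.
Lemma my_ReMl (z : C) (x : R) : complex.Re (x%:C * z) = x * complex.Re z.
Proof. by case: z => a b /=; ring. Qed.
Lemma my_ImMl (z : C) (x : R) : complex.Im (x%:C * z) = x * complex.Im z.
Proof. by case: z => a b /=; ring. Qed.
Lemma my_normsq (x y : R) : (x +i* y : C) * (x +i* y)^* = (x ^+ 2 + y ^+ 2)%:C.
Proof. by rewrite /=; congr (_ +i* _); ring. Qed.
Lemma my_conj_mul_real (z : C) : z^* * z = (complex.Re (z^* * z))%:C.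
Proof. by case: z => a b; rewrite /=; congr (_ +i* _); ring. Qed.
Lemma my_ReMex (z : C) x : complex.Re (z * ex x) = complex.Re z * cos x - complex.Im z * sin x.
Proof. by case: z => a b /=; ring. Qed.
Lemma my_ImMex (z : C) x : complex.Im (z * ex x) = complex.Re z * sin x + complex.Im z * cos x.
Proof. by case: z => a b /=; ring. Qed.
Lemma my_ler0c (x : R) : (0 <= (x%:C : C)) = (0 <= x).
Proof. exact: ler0c. Qed.
Lemma my_complexI (x y : R) : (x%:C : C) = y%:C -> x = y.
Proof. by case. Qed.
Lemma my_conjM (x y : C) : (x * y)^* = x^* * y^*.
Proof. by case: x => a b; case: y => c d /=; congr (_ +i* _); ring. Qed.
Lemma my_conjD (x y : C) : (x + y)^* = x^* + y^*.
Proof. by case: x => a b; case: y => c d /=; congr (_ +i* _); ring. Qed.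
Lemma my_conjB (x y : C) : (x - y)^* = x^* - y^*.
Proof. by case: x => a b; case: y => c d /=; congr (_ +i* _); ring. Qed.
Lemma my_conjK (x : C) : x^*^* = x.
Proof. by case: x => a b /=; congr (_ +i* _); ring. Qed.
Lemma my_conj0 : (0 : C)^* = 0.
Proof. by apply/eqP; rewrite eq_complex /= oppr0 !eqxx. Qed.
Lemma my_conj_sum (I : finType) (F : I -> C) : (\sum_j F j)^* = \sum_j (F j)^*.
Proof. by elim/big_rec2: _ => [|j x y _ <-]; rewrite ?my_conj0 ?my_conjD. Qed.
End Cx.
End CxSec.


Lemma final_ineq (R : realType) (X Y q : R) : 1 - q <= X -> 1 - 2 * q <= X ^+ 2 + Y ^+ 2.
Proof.
move=> HX.
have Y2 : 0 <= Y ^+ 2 by exact: sqr_ge0.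
have [q0|q0] := leP 0 (1 - q).
  have H1 : 0 <= (X - (1 - q)) * (X + (1 - q)).
    apply: mulr_ge0; first by rewrite subr_ge0.
    apply: addr_ge0 => //; exact: le_trans q0 HX.
  have H2 : 0 <= q ^+ 2 by exact: sqr_ge0.
  nra.
have X2 : 0 <= X ^+ 2 by exact: sqr_ge0.
nra.
Qed.

Section Main.
Local Open Scope complex_scope.
Local Open Scope ring_scope.
Variable R : realType.
Notation C := (R[i] : numClosedFieldType).

Lemma main_lemma n (H : 'M[R]_n) (HT : H^T = H) (s r : 'I_n) (t0 h : R)
  (Hp : fidelity H s r t0 = 1) :
  1 - h ^+ 2 * ((H ^+ 2) s s - (H s s) ^+ 2) <= fidelity H s r (t0 + h).
Proof.
have [P [l [Hort Hrep]]] := spectral_rep HT.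
pose a : 'I_n -> C := fun j => P j s; pose b : 'I_n -> C := fun j => P j r.
pose c : 'I_n -> C := fun j => (a j)^* * b j.
pose al j := complex.Re (c j); pose be j := complex.Im (c j).
have Hsr : forall m, (H ^+ m) s r = \sum_j al j * l j ^+ m.
  move=> m; have := congr1 (@complex.Re R) (Hrep m s r); rewrite /= my_Re_sum => ->.
  by apply: eq_bigr => j _; rewrite my_ReMr.
have Hz : forall m, 0 = \sum_j be j * l j ^+ m.
  move=> m; have := congr1 (@complex.Im R) (Hrep m s r); rewrite /= my_Im_sum => E.
  by apply: (eq_trans E); apply: eq_bigr => j _; rewrite my_ImMr.
have Ere : forall t, expiH_re H t s r = \sum_j al j * cos (t * l j).
  by move=> t; exact: (@limn_cos R n (fun m => (H ^+ m) s r) al l t Hsr).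
have Eim : forall t, expiH_im H t s r = \sum_j al j * sin (t * l j).
  by move=> t; exact: (@limn_sin R n (fun m => (H ^+ m) s r) al l t Hsr).
have Zc : forall t, \sum_j be j * cos (t * l j) = 0 by move=> t; exact: zero_cos.
have Zs : forall t, \sum_j be j * sin (t * l j) = 0 by move=> t; exact: zero_sin.
pose Phi : R -> C := fun t => \sum_j c j * ex (t * l j).
have Hfid : forall t, (fidelity H s r t)%:C = Phi t * (Phi t)^*.
  move=> t; rewrite (my_cplxE (Phi t)) my_normsq /fidelity Ere Eim.
  congr ((_ ^+ 2 + _ ^+ 2)%:C).
    rewrite /Phi my_Re_sum [X in _ = X](eq_bigr (fun j => al j * cos (t * l j) - be j * sin (t * l j))); last first.
      by move=> j _; rewrite my_ReMex.
    by rewrite sumrB Zs subr0.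
  rewrite /Phi my_Im_sum [X in _ = X](eq_bigr (fun j => al j * sin (t * l j) + be j * cos (t * l j))); last first.
    by move=> j _; rewrite my_ImMex.
  by rewrite big_split /= Zc addr0.
pose u : 'I_n -> C := fun j => b j * ex (t0 * l j).
pose F0 := Phi t0.
have F0u : F0 = \sum_j (a j)^* * u j.
  by rewrite /F0 /Phi; apply: eq_bigr => j _; rewrite /c /u mulrA.
have Hp1 : F0 * F0^* = 1 by rewrite -Hfid Hp.
have Hp2 : F0^* * F0 = 1 by rewrite mulrC.
have Haa : \sum_j (a j)^* * a j = 1 by rewrite Hort eqxx.
have Hbb : \sum_j (b j)^* * b j = 1 by rewrite Hort eqxx.
have Huu : \sum_j (u j)^* * u j = 1.
  rewrite -Hbb; apply: eq_bigr => j _; rewrite /u my_conjM.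
  by rewrite mulrACA [(ex _)^* * _]mulrC my_ex_conj mulr1.
have Hua : \sum_j (u j)^* * a j = F0^*.
  rewrite F0u my_conj_sum; apply: eq_bigr => j _.
  by rewrite my_conjM my_conjK mulrC.
have S0 : \sum_j (u j - F0 * a j)^* * (u j - F0 * a j) = 0.
  rewrite (eq_bigr (fun j => (u j)^* * u j - F0 * ((u j)^* * a j)
     - F0^* * ((a j)^* * u j) + F0^* * F0 * ((a j)^* * a j))); last first.
    by move=> j _; rewrite my_conjB my_conjM; ring.
  rewrite big_split /= !sumrB -!mulr_sumr Huu Hua -F0u Haa Hp2.
  by rewrite mulr1 mulrC Hp2; ring.
have Hcs : forall j, u j = F0 * a j.
  have Hge : forall k, 0 <= (u k - F0 * a k)^* * (u k - F0 * a k).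
    by move=> k; rewrite mulrC mul_conjC_ge0.
  have Z := psumr_eq0P (fun k _ => Hge k) S0.
  move=> j; apply/eqP; rewrite -subr_eq0 -mul_conjC_eq0 mulrC; apply/eqP.
  exact: Z.
pose Psi : C := \sum_j (a j)^* * a j * ex (h * l j).
have HPhi : Phi (t0 + h) = F0 * Psi.
  rewrite /Phi /Psi mulr_sumr; apply: eq_bigr => j _.
  rewrite mulrDl -my_exD.
  have Hj := Hcs j; rewrite /u in Hj.
  transitivity ((a j)^* * (b j * ex (t0 * l j)) * ex (h * l j)); first by rewrite /c; ring.
  by rewrite Hj; ring.
have fid' : (fidelity H s r (t0 + h))%:C = Psi * Psi^*.
  by rewrite Hfid HPhi my_conjM mulrACA Hp1 mul1r.
pose rho j := complex.Re ((a j)^* * a j).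
have rhoE : forall j, (a j)^* * a j = (rho j)%:C by move=> j; exact: my_conj_mul_real.
have rho0 : forall j, 0 <= rho j.
  by move=> j; rewrite -my_ler0c -rhoE mulrC mul_conjC_ge0.
have rho1 : \sum_j rho j = 1.
  have := congr1 (@complex.Re R) Haa; rewrite my_Re_sum /= => E.
  by rewrite /rho E.
pose mu := \sum_j rho j * l j.
pose X := \sum_j rho j * cos (h * (l j - mu)).
pose Y := \sum_j rho j * sin (h * (l j - mu)).
have PsiE : ex (- (h * mu)) * Psi = X +i* Y.
  rewrite /Psi mulr_sumr [LHS]my_cplxE my_Re_sum my_Im_sum.
  congr (_ +i* _); apply: eq_bigr => j _;
    rewrite rhoE mulrCA my_exD ?my_ReMl ?my_ImMl /ex /=; congr (_ * _); congr (_ _); ring.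
have fid2 : fidelity H s r (t0 + h) = X ^+ 2 + Y ^+ 2.
  apply: my_complexI; rewrite fid' -my_normsq -PsiE my_conjM mulrACA my_ex_conj mul1r.
  by [].
have Hss1 : H s s = mu.
  have E := congr1 (@complex.Re R) (Hrep 1%N s s); rewrite /= my_Re_sum in E.
  rewrite -{1}(expr1 H) E /mu; apply: eq_bigr => j _.
  by rewrite my_ReMr expr1.
have Hss2 : (H ^+ 2) s s = \sum_j rho j * l j ^+ 2.
  have E := congr1 (@complex.Re R) (Hrep 2%N s s); rewrite /= my_Re_sum in E.
  rewrite E; apply: eq_bigr => j _.
  by rewrite my_ReMr.
have Sq : \sum_j rho j * (1 - (h * (l j - mu)) ^+ 2 / 2)
    = 1 - h ^+ 2 / 2 * (\sum_j rho j * l j ^+ 2 - mu ^+ 2).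
  rewrite (eq_bigr (fun j => rho j - h ^+ 2 / 2 * (rho j * l j ^+ 2)
    + h ^+ 2 * mu * (rho j * l j) - h ^+ 2 * mu ^+ 2 / 2 * rho j)); last first.
    by move=> j _; field.
  rewrite sumrB big_split /= sumrB -!mulr_sumr rho1 -/mu.
  by field.
have HX : 1 - h ^+ 2 / 2 * (\sum_j rho j * l j ^+ 2 - mu ^+ 2) <= X.
  rewrite -Sq; apply: ler_sum => j _; apply: ler_wpM2l => //; exact: cos_ge_quad.
rewrite fid2 Hss1 Hss2.
move: HX; set S := \sum_j rho j * l j ^+ 2 => HX.
rewrite (_ : h ^+ 2 * (S - mu ^+ 2) = 2 * (h ^+ 2 / 2 * (S - mu ^+ 2))); last by field.
exact: final_ineq.
Qed.
End Main.


Theorem corollary2p3 (R : realType) (n : nat)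
  (e : rel 'I_n) (w : 'I_n -> 'I_n -> R)
  (e_sym : symmetric e) (e_irr : irreflexive e)
  (w_sym : forall j k, w j k = w k j)
  (e_conn : forall j k, connect e j k)
  (H : 'M[R]_n) (HH : H = adjacency e w \/ H = laplacian e w)
  (lam1 lamn : R)
  (H1 : eigenvalue H lam1) (Hn : eigenvalue H lamn)
  (Hext : forall a, eigenvalue H a -> lam1 <= a <= lamn)
  (s r : 'I_n) (t0 h : R)
  (Hp : fidelity H s r t0 = 1)
  (Hh : `|h| * (lamn - lam1) < pi) :
  1 - h ^+ 2 * ((H ^+ 2) s s - (H s s) ^+ 2) <= fidelity H s r (t0 + h).
Proof.
have AT : (adjacency e w)^T = adjacency e w.
  by apply/matrixP => i j; rewrite !mxE (e_sym j i) (w_sym j i).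
apply: main_lemma => //.
case: HH => ->; first exact: AT.
by rewrite /laplacian linearB /= tr_diag_mx AT.
Qed.
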